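(* Let $X$ be a topological space with base point $x_0$ such that there exists a nonconstant (nontrivial) path in $X$ starting at $x_0$. Let $\Omega X=\{\alpha:[0,1]\to X \text{ continuous}:\alpha(0)=\alpha(1)=x_0\}$ with the compact-open topology, and $\Omega_{\mathrm{tf}}=\{\alpha\in\Omega X: \alpha(t)=\alpha(1-t)\ \text{for all } t\in[0,1]\}$. Then the inclusion $\Omega X\setminus\Omega_{\mathrm{tf}}\hookrightarrow\Omega X$ is a homotopy equivalence. *)

(* Defs.v *)
From HB Require Import structures.
From mathcomp Require Import all_boot all_order all_algebra.
From mathcomp Require Import all_classical all_reals all_analysis.
Set Implicit Arguments. Unset Strict Implicit. Unset Printing Implicit Defensive.
Import Order.TTheory GRing.Theory Num.Theory numFieldNormedType.Exports.
Local Open Scope classical_set_scope.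
Local Open Scope ring_scope.

Definition uI (R : realType) : set R := [set t | 0 <= t <= 1].
Notation II R := (set_type (@uI R)).

Definition is_path (R : realType) (X : topologicalType) (g : II R -> X) :=
  continuous g.

Definition loops (R : realType) (X : topologicalType) (x0 : X)
  : set {compact-open, II R -> X} :=
  [set a | continuous (a : II R -> X) /\
           (forall t : II R, set_val t = 0 -> a t = x0) /\
           (forall t : II R, set_val t = 1 -> a t = x0)].

Definition Omega (R : realType) (X : topologicalType) (x0 : X) : topologicalType :=
  set_type (@loops R X x0).

Definition tf (R : realType) (X : topologicalType) (x0 : X) : set (@Omega R X x0) :=
  [set a | forall s t : II R, set_val s = 1 - set_val t ->
       (set_val a : II R -> X) s = (set_val a : II R -> X) t].

Definition Omega_ntf (R : realType) (X : topologicalType) (x0 : X) : topologicalType :=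
  set_type (~` @tf R X x0).

Definition homotopic (R : realType) (Y Z : topologicalType) (f g : Y -> Z) :=
  exists H : Y * II R -> Z, continuous H /\
    (forall y (t : II R), set_val t = 0 -> H (y, t) = f y) /\
    (forall y (t : II R), set_val t = 1 -> H (y, t) = g y).

Definition homotopy_equivalence (R : realType) (Y Z : topologicalType) (f : Y -> Z) :=
  continuous f /\ exists g : Z -> Y, continuous g /\
    homotopic R (g \o f) idfun /\ homotopic R (f \o g) idfun.

(* Main.v *)
Require Import Defs.
From HB Require Import structures.
From mathcomp Require Import all_boot all_order all_algebra.
From mathcomp Require Import all_classical all_reals all_analysis.
Import Order.TTheory GRing.Theory Num.Theory numFieldNormedType.Exports.
Local Open Scope classical_set_scope.
Local Open Scope ring_scope.

Lemma idC {T : topologicalType} : continuous (@id T).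
Proof. by move=> x; exact: cvg_id. Qed.

Lemma clamp_subproof {R : realType} (x : R) : @uI R (Num.min 1 (Num.max 0 x)).
Proof.
rewrite /uI /=; apply/andP; split.
  by rewrite le_min ler01 le_max lexx.
by rewrite ge_min lexx.
Qed.

Definition clamp {R : realType} (x : R) : II R := SigSub (mem_set (clamp_subproof x)).

Lemma clampE {R : realType} (x : R) : set_val (clamp x) = Num.min 1 (Num.max 0 x).
Proof. by []. Qed.

Lemma clamp_id {R : realType} (x : R) : 0 <= x -> x <= 1 -> set_val (clamp x) = x.
Proof. by move=> h0 h1; rewrite clampE max_r // min_r. Qed.

Lemma clamp_le0 {R : realType} (x : R) : x <= 0 -> set_val (clamp x) = 0.
Proof. by move=> h0; rewrite clampE max_l // min_r. Qed.

Lemma clamp_ge1 {R : realType} (x : R) : 1 <= x -> set_val (clamp x) = 1.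
Proof. by move=> h1; rewrite clampE max_r ?min_l // (le_trans ler01). Qed.

Lemma clamp_cts {R : realType} : continuous (@clamp R).
Proof.
apply: continuous_comp_initial.
have h : continuous (fun x : R => Num.max 0 x).
  exact: (@max_fun_continuous _ R R (cst 0) (fun x => x) (@cst_continuous R R 0) idC).
have h2 := (@min_fun_continuous _ R R (cst 1) _ (@cst_continuous R R 1) h).
move=> x; exact: h2 x.
Qed.

Lemma II_compact {R : realType} : compact [set: II R].
Proof.
have -> : [set: II R] = clamp @` `[0, 1].
  apply/seteqP; split => // t _; exists (set_val t).
    have := set_valP t; rewrite /uI /= => /andP[h0 h1].
    by rewrite in_itv /= h0 h1.
  apply: val_inj; have := set_valP t; rewrite /uI /= => /andP[h0 h1].
  by have := @clamp_id R _ h0 h1; rewrite !set_valE.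
apply: continuous_compact; last exact: segment_compact.
by apply: continuous_subspaceT => x; exact: clamp_cts.
Qed.

Lemma II_lc {R : realType} : locally_compact [set: II R].
Proof.
move=> x _; rewrite withinET; exists setT; first exact: filterT.
split; [exact: II_compact | exact: closedT].
Qed.

Lemma II_reg {R : realType} : @regular_space (II R).
Proof. exact: uniform_regular. Qed.

Lemma paste {R : realType} {Y Z : topologicalType} (p : Y -> R) (f g : Y -> Z) :
  continuous p -> continuous f -> continuous g -> (forall y, p y = 0 -> f y = g y) ->
  continuous (fun y => if p y <= 0 then f y else g y).
Proof.
move=> cp cf cg fg y U /=.
have [py0|py0|py0] := ltgtP (p y) 0.
- move=> hU.
  have Hf := cf y U hU.
  have Hp : \forall t \near y, p t < 0 by apply: (@cvgr_lt R Y (nbhs y) _ p (p y) (cp y) 0 py0).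
  suff H : \forall z \near y, U (if p z <= 0 then f z else g z) by exact: H.
  near=> z.
  have -> : p z <= 0 by apply: ltW; near: z.
  by near: z.
- move=> hU.
  have Hg := cg y U hU.
  have Hp : \forall t \near y, 0 < p t by apply: (@cvgr_gt R Y (nbhs y) _ p (p y) (cp y) 0 py0).
  suff H : \forall z \near y, U (if p z <= 0 then f z else g z) by exact: H.
  near=> z.
  have -> : (p z <= 0) = false by apply/negbTE; rewrite -ltNge; near: z.
  by near: z.
- move=> hU.
  have Hf := cf y U hU.
  have Hg := cg y U (ltac:(by rewrite -fg)).
  suff H : \forall z \near y, U (if p z <= 0 then f z else g z) by exact: H.
  near=> z.
  case: ifP => _; near: z; [exact: Hf|exact: Hg].
Unshelve. all: by end_near.
Qed.

Import ArrowAsCompactOpen.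

Lemma ev_cts {R : realType} {X : topologicalType} (x0 : X) :
  continuous (fun z : @Omega R X x0 * II R => (set_val z.1 : II R -> X) z.2).
Proof.
have h1 : continuous (fun a : @Omega R X x0 => (set_val a : II R -> X)).
  exact: initial_continuous.
have h2 : forall a : @Omega R X x0, continuous (set_val a : II R -> X).
  by move=> a; have [] := set_valP a.
have := @continuous_uncurry_regular (@Omega R X x0) (II R) X _ II_lc II_reg h1 h2.
move=> h.
have -> : (fun z : @Omega R X x0 * II R => (set_val z.1 : II R -> X) z.2) =
  uncurry (fun a : @Omega R X x0 => (set_val a : II R -> X)) by apply/funext => -[].
exact: h.
Qed.

From mathcomp Require Import lra.

Lemma cfst {A B : topologicalType} : continuous (@fst A B).
Proof. move=> z; exact: cvg_fst. Qed.
Lemma csnd {A B : topologicalType} : continuous (@snd A B).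
Proof. move=> z; exact: cvg_snd. Qed.

Section rc.
Context {R : realType} {T : topologicalType}.
Implicit Types (a b : T -> R).
Lemma cadd a b : continuous a -> continuous b -> continuous (fun z => a z + b z).
Proof. by move=> ca cb z; exact: cvgD (ca z) (cb z). Qed.
Lemma copp a : continuous a -> continuous (fun z => - a z).
Proof. by move=> ca z; exact: cvgN (ca z). Qed.
Lemma csub a b : continuous a -> continuous b -> continuous (fun z => a z - b z).
Proof. by move=> ca cb; apply: cadd => //; exact: copp. Qed.
Lemma cmul a b : continuous a -> continuous b -> continuous (fun z => a z * b z).
Proof. by move=> ca cb z; exact: cvgM (ca z) (cb z). Qed.
Lemma ccst (c : R) : continuous (fun _ : T => c).
Proof. exact: cst_continuous. Qed.
Lemma cabs a : continuous a -> continuous (fun z => `|a z|).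
Proof. by move=> ca z; apply: continuous_comp; [exact: ca | exact: norm_continuous]. Qed.
End rc.

Lemma cval {R : realType} : continuous (fun t : II R => set_val t).
Proof. exact: initial_continuous. Qed.

Lemma cpair {A B C : topologicalType} (f : A -> B) (g : A -> C) :
  continuous f -> continuous g -> continuous (fun z => (f z, g z)).
Proof. by move=> cf cg z; apply: cvg_pair; [exact: cf|exact: cg]. Qed.

Lemma ccomp {A B C : topologicalType} (f : A -> B) (g : B -> C) :
  continuous f -> continuous g -> continuous (fun z => g (f z)).
Proof. by move=> cf cg z; apply: continuous_comp; [exact: cf|exact: cg]. Qed.

Section defs.
Local Notation Y R X x0 := ((@Omega R X x0 * II R) * II R)%type.

Definition pF {R : realType} {X : topologicalType} {x0 : X} (z : Y R X x0) : R :=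
  set_val z.2 - set_val z.1.2 / 4.
Definition Fb {R : realType} {X : topologicalType} {x0 : X} (g : II R -> X) (z : Y R X x0) : X :=
  g (clamp (set_val z.1.2 - `|8 * set_val z.2 - set_val z.1.2|)).
Definition ev {R : realType} {X : topologicalType} {x0 : X} (z : @Omega R X x0 * II R) : X :=
  (set_val z.1 : II R -> X) z.2.
Definition Fa {R : realType} {X : topologicalType} {x0 : X} (z : Y R X x0) : X :=
  ev (z.1.1, clamp ((1 + set_val z.1.2) * (set_val z.2 - 2^-1) + 2^-1)).
Definition F {R : realType} {X : topologicalType} {x0 : X} (g : II R -> X) (z : Y R X x0) : X :=
  if pF z <= 0 then Fb g z else Fa z.

Lemma cs2 {R : realType} {X : topologicalType} {x0 : X} :
  continuous (fun z : Y R X x0 => set_val z.2).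
Proof. exact: (@ccomp _ _ _ snd (fun t : II R => set_val t) csnd cval). Qed.
Lemma cs12 {R : realType} {X : topologicalType} {x0 : X} :
  continuous (fun z : Y R X x0 => set_val z.1.2).
Proof. exact: (@ccomp _ _ _ fst (fun w : @Omega R X x0 * II R => set_val w.2) cfst (@ccomp _ _ _ snd (fun t : II R => set_val t) csnd cval)). Qed.

Ltac cont := repeat first [ exact: cs2 | exact: cs12 | exact: ccst | apply: cadd | apply: csub | apply: cmul | apply: copp | apply: cabs ].

Lemma F_cts {R : realType} {X : topologicalType} {x0 : X} (g : II R -> X) :
  continuous g -> (forall t : II R, set_val t = 0 -> g t = x0) ->
  continuous (@F R X x0 g).
Proof.
move=> cg g0; apply: paste.
- rewrite /pF; cont.
- rewrite /Fb; apply: (@ccomp _ _ _ _ g) => //; apply: (@ccomp _ _ _ _ clamp); last exact: clamp_cts.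
  cont.
- rewrite /Fa; apply: (@ccomp _ _ _ _ ev); last exact: ev_cts. apply: cpair.
    exact: (@ccomp _ _ _ fst fst cfst cfst).
  apply: (@ccomp _ _ _ _ clamp); last exact: clamp_cts.
  cont.
- move=> z; rewrite /pF /Fb /Fa => /eqP; rewrite subr_eq0 => /eqP ht.
  have /andP[s0 s1] : 0 <= set_val z.1.2 <= 1 by have := set_valP z.1.2.
  have e1 : set_val (clamp (set_val z.1.2 - `|8 * set_val z.2 - set_val z.1.2|)) = 0.
    apply: clamp_le0; rewrite ht.
    have -> : 8 * (set_val z.1.2 / 4) - set_val z.1.2 = set_val z.1.2 by lra.
    by rewrite ger0_norm // subrr.
  have e2 : set_val (clamp ((1 + set_val z.1.2) * (set_val z.2 - 2^-1) + 2^-1)) = 0.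
    by apply: clamp_le0; rewrite ht; nra.
  rewrite g0 // /ev /=.
  have [_ [h0 _]] := set_valP z.1.1.
  by symmetry; apply: h0.
Qed.
End defs.

Definition Hfun {R : realType} {X : topologicalType} {x0 : X} (g : II R -> X)
  (y : @Omega R X x0 * II R) : {compact-open, II R -> X} := fun t => F g (y, t).

Lemma Hfun_loop {R : realType} {X : topologicalType} {x0 : X} (g : II R -> X)
  (cg : continuous g) (g0 : forall t : II R, set_val t = 0 -> g t = x0) (y : @Omega R X x0 * II R) :
  @loops R X x0 (Hfun g y).
Proof.
have /andP[s0 s1] : 0 <= set_val y.2 <= 1 by have := set_valP y.2.
split; last split.
- by have [_ +] := continuous_curry (@F_cts R X x0 g cg g0); apply.
- move=> t t0; rewrite /Hfun /F /pF /= t0 ifT; last by lra.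
  rewrite /Fb /= t0 g0 //; apply: clamp_le0.
  by rewrite mulr0 sub0r normrN ger0_norm // subrr.
- move=> t t1; rewrite /Hfun /F /pF /= t1 ifF; last by apply/negbTE; rewrite -ltNge; lra.
  rewrite /Fa /ev /=.
  have [_ [_ h1]] := set_valP y.1.
  by apply: h1; rewrite t1 clamp_ge1 //; lra.
Qed.

Definition H {R : realType} {X : topologicalType} {x0 : X} {g : II R -> X}
  (cg : continuous g) (g0 : forall t : II R, set_val t = 0 -> g t = x0)
  (y : @Omega R X x0 * II R) : @Omega R X x0 :=
  SigSub (mem_set (@Hfun_loop R X x0 g cg g0 y)).

Lemma HE {R : realType} {X : topologicalType} {x0 : X} (g : II R -> X)
  (cg : continuous g) (g0 : forall t : II R, set_val t = 0 -> g t = x0) y t :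
  (set_val (H cg g0 y) : II R -> X) t = F g (y, t).
Proof. by []. Qed.

Lemma H_cts {R : realType} {X : topologicalType} {x0 : X} (g : II R -> X)
  (cg : continuous g) (g0 : forall t : II R, set_val t = 0 -> g t = x0) :
  continuous (H cg g0).
Proof.
apply: continuous_comp_initial.
have [+ _] := continuous_curry (@F_cts R X x0 g cg g0).
by move=> h y; exact: h y.
Qed.

Lemma II_eq {R : realType} (u v : II R) : set_val u = set_val v -> u = v.
Proof. by move=> e; apply: val_inj. Qed.

Lemma H0 {R : realType} {X : topologicalType} {x0 : X} (g : II R -> X)
  (cg : continuous g) (g0 : forall t : II R, set_val t = 0 -> g t = x0) a s :
  set_val s = 0 -> H cg g0 (a, s) = a.
Proof.
move=> s0; apply: val_inj; apply/funext => t.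
rewrite -[LHS]/((set_val (H cg g0 (a, s)) : II R -> X) t) HE /F /pF /= s0.
have /andP[t0 t1] : 0 <= set_val t <= 1 by have := set_valP t.
have [_ [h0 _]] := set_valP a.
case: ifP => ht.
  have tz : set_val t = 0 by lra.
  rewrite /Fb /= s0 tz g0; last first.
    by apply: clamp_le0; rewrite mulr0 subr0 normr0 subrr.
  by symmetry; apply: h0.
rewrite /Fa /ev /= s0.
congr ((set_val a : II R -> X) _); apply: II_eq.
by rewrite clamp_id; lra.
Qed.

Lemma H_ntf_tf {R : realType} {X : topologicalType} {x0 : X} (g : II R -> X)
  (cg : continuous g) (g0 : forall t : II R, set_val t = 0 -> g t = x0)
  (a : @Omega R X x0) s :
  ~ @tf R X x0 a -> ~ @tf R X x0 (H cg g0 (a, s)).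
Proof.
move=> ntf hH; apply: ntf => s1 t1 e; apply: contrapT => ne.
have /andP[sg0 sg1] : 0 <= set_val s <= 1 by have := set_valP s.
have /andP[t10 t11] : 0 <= set_val t1 <= 1 by have := set_valP t1.
have [_ [h0 h1]] := set_valP a.
have t1p : 0 < set_val t1.
  rewrite lt_neqAle t10 andbT; apply/eqP => t1z; apply: ne.
  transitivity x0; [apply: h1 | symmetry; apply: h0] => //.
  by rewrite e -t1z subr0.
have s1p : 0 < set_val s1.
  have /andP[s10 _] : 0 <= set_val s1 <= 1 by have := set_valP s1.
  rewrite lt_neqAle s10 andbT; apply/eqP => s1z; apply: ne.
  transitivity x0; [apply: h0 | symmetry; apply: h1] => //.
  by rewrite e in s1z; lra.
pose sg := set_val s.
pose wt := (set_val t1 - 2^-1) / (1 + sg).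
pose ws := (set_val s1 - 2^-1) / (1 + sg).
have sgp : 0 < 1 + sg by rewrite /sg; lra.
have ewt : (1 + sg) * wt = set_val t1 - 2^-1 by rewrite /wt mulrC -mulrA mulVf ?mulr1 // gt_eqF.
have ews : (1 + sg) * ws = set_val s1 - 2^-1 by rewrite /ws mulrC -mulrA mulVf ?mulr1 // gt_eqF.
have wtb : -(2^-1) <= wt <= 2^-1.
  apply/andP; split; rewrite /wt.
    by rewrite ler_pdivlMr //; rewrite /sg in sgp *; nra.
  by rewrite ler_pdivrMr //; rewrite /sg in sgp *; nra.
have wsb : -(2^-1) <= ws <= 2^-1.
  have /andP[_ s11] : 0 <= set_val s1 <= 1 by have := set_valP s1.
  apply/andP; split; rewrite /ws.
    by rewrite ler_pdivlMr //; rewrite /sg in sgp *; nra.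
  by rewrite ler_pdivrMr //; rewrite /sg in sgp *; nra.
have wsum : ws = - wt.
  have nz : 1 + sg != 0 by rewrite gt_eqF.
  apply: (mulfI nz); rewrite ews mulrN ewt e; lra.
pose u := @clamp R (wt + 2^-1).
pose u' := @clamp R (ws + 2^-1).
have eu : set_val u = wt + 2^-1 by rewrite clamp_id; lra.
have eu' : set_val u' = ws + 2^-1 by rewrite clamp_id; lra.
have Hu : (set_val (H cg g0 (a, s)) : II R -> X) u = (set_val a : II R -> X) t1.
  rewrite HE /F /pF /= -/sg eu ifF; last first.
    apply/negbTE; rewrite -ltNge.
    have : 0 < (1 + sg) * (wt + 2^-1 - sg / 4).
      rewrite /sg in sgp ewt *; nra.
    by rewrite pmulr_rgt0 // subr_gt0.
  rewrite /Fa /ev /=; congr ((set_val a : II R -> X) _); apply: II_eq.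
  by rewrite eu -/sg (_ : wt + 2^-1 - 2^-1 = wt) ?ewt ?clamp_id; lra.
have Hu' : (set_val (H cg g0 (a, s)) : II R -> X) u' = (set_val a : II R -> X) s1.
  rewrite HE /F /pF /= -/sg eu' ifF; last first.
    apply/negbTE; rewrite -ltNge.
    have : 0 < (1 + sg) * (ws + 2^-1 - sg / 4).
      rewrite /sg in sgp ews *; nra.
    by rewrite pmulr_rgt0 // subr_gt0.
  rewrite /Fa /ev /=; congr ((set_val a : II R -> X) _); apply: II_eq.
  have /andP[_ s11] : 0 <= set_val s1 <= 1 by have := set_valP s1.
  by rewrite eu' -/sg (_ : ws + 2^-1 - 2^-1 = ws) ?ews ?clamp_id; lra.
apply: ne; rewrite -Hu -Hu'; apply: hH.
by rewrite eu eu' wsum; lra.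
Qed.

Lemma H_ntf_one {R : realType} {X : topologicalType} {x0 : X} (g : II R -> X)
  (cg : continuous g) (g0 : forall t : II R, set_val t = 0 -> g t = x0)
  (u0 : II R) (gu0 : g u0 <> x0) (a : @Omega R X x0) s :
  set_val s = 1 -> ~ @tf R X x0 (H cg g0 (a, s)).
Proof.
move=> s1 hH.
have /andP[u00 u01] : 0 <= set_val u0 <= 1 by have := set_valP u0.
have [_ [h0 h1]] := set_valP a.
pose u := @clamp R (set_val u0 / 8).
pose u' := @clamp R (1 - set_val u0 / 8).
have eu : set_val u = set_val u0 / 8 by rewrite clamp_id; lra.
have eu' : set_val u' = 1 - set_val u0 / 8 by rewrite clamp_id; lra.
have Hu : (set_val (H cg g0 (a, s)) : II R -> X) u = g u0.
  rewrite HE /F /pF /= s1 eu ifT; last by lra.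
  rewrite /Fb /= s1 eu; congr g; apply: II_eq.
  rewrite ler0_norm; last by lra.
  by rewrite clamp_id; lra.
have Hu' : (set_val (H cg g0 (a, s)) : II R -> X) u' = x0.
  rewrite HE /F /pF /= s1 eu' ifF; last by apply/negbTE; rewrite -ltNge; lra.
  rewrite /Fa /ev /=; apply: h1.
  by rewrite s1 clamp_ge1 //; lra.
apply: gu0; have := hH u u'; rewrite Hu Hu'; apply.
by rewrite eu eu'; lra.
Qed.

Theorem lemma1 (R : realType) (X : topologicalType) (x0 : X)
  (hpath : exists g : II R -> X, is_path g /\
     (forall t : II R, set_val t = 0 -> g t = x0) /\
     (exists s t : II R, g s <> g t)) :
  @homotopy_equivalence R (@Omega_ntf R X x0) (@Omega R X x0) set_val.
Proof.
case: hpath => g [cg [g0 [s [t nst]]]].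
have [u0 gu0] : exists u0, g u0 <> x0.
  case: (pselect (g s = x0)) => gs; last by exists s.
  by exists t => gt; apply: nst; rewrite gs gt.
split; first exact: initial_continuous.
pose one := @clamp R 1.
have one1 : set_val one = 1 by rewrite clamp_id //; lra.
pose rev := fun s : II R => @clamp R (1 - set_val s).
have crev : continuous rev.
  apply: (@ccomp _ _ _ _ clamp); last exact: clamp_cts.
  by apply: csub; [exact: ccst | exact: cval].
have rev0 : forall t : II R, set_val t = 0 -> rev t = one.
  by move=> u u0'; apply: II_eq; rewrite one1 clamp_id u0'; lra.
have rev1 : forall t : II R, set_val t = 1 -> set_val (rev t) = 0.
  by move=> u u1; rewrite clamp_id u1; lra.
pose G := fun a : @Omega R X x0 =>
  (@SigSub (@Omega R X x0) _ (~` @tf R X x0) (H cg g0 (a, one))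
     (mem_set (@H_ntf_one R X x0 g cg g0 u0 gu0 a one one1)) : @Omega_ntf R X x0).
have cH : continuous (H cg g0) := @H_cts R X x0 g cg g0.
exists G; split; last split.
- apply: continuous_comp_initial.
  apply: (@ccomp _ _ _ (fun a => (a, one)) (H cg g0)) => //.
  by apply: cpair; [exact: idC | exact: cst_continuous].
- exists (fun z : @Omega_ntf R X x0 * II R =>
    (@SigSub (@Omega R X x0) _ (~` @tf R X x0) (H cg g0 (set_val z.1, rev z.2))
      (mem_set (@H_ntf_tf R X x0 g cg g0 (set_val z.1) (rev z.2) (set_mem (valP z.1)))) : @Omega_ntf R X x0)).
  split; last split.
  + apply: continuous_comp_initial.
    apply: (@ccomp _ _ _ (fun z : @Omega_ntf R X x0 * II R => (set_val z.1, rev z.2)) (H cg g0)) => //.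
    apply: cpair.
      apply: (@ccomp _ _ _ fst (fun b : @Omega_ntf R X x0 => set_val b)); [exact: cfst | exact: initial_continuous].
    by apply: (@ccomp _ _ _ snd rev); [exact: csnd | exact: crev].
  + move=> y u u0'; apply: val_inj => /=.
    by rewrite rev0.
  + move=> y u u1; apply: val_inj => /=.
    by rewrite H0 // rev1.
- exists (fun z : @Omega R X x0 * II R => H cg g0 (z.1, rev z.2)).
  split; last split.
  + apply: (@ccomp _ _ _ (fun z : @Omega R X x0 * II R => (z.1, rev z.2)) (H cg g0)) => //.
    apply: cpair; [exact: cfst | by apply: (@ccomp _ _ _ snd rev); [exact: csnd | exact: crev]].
  + by move=> y u u0' /=; rewrite rev0.
  + by move=> y u u1 /=; rewrite H0 // rev1.
Qed.
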